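(* Under the standing setting and the absorbing-state assumptions (i)–(iv) in the context, there exists $K>0$ such that for all $\mathbf{x}\in\mathbb{R}^N$, $\mathbf{v}\in\chi$, $\lambda>0$, $t\ge0$ and every sequence $l=(\mathbf{x}^{(k)})_{k\ge1}$ with all $\mathbf{x}^{(k)}$ in the closed $\|\cdot\|_1$-ball $\bar B\big(\mathbf{x},\frac{1-z_0}{2K_0\tilde n}\big)$, $$\|\tilde\mu_t^{\lambda,\mathbf{x},\mathbf{v}}-\mu_t^{\lambda,\mathbf{x},\mathbf{v},l}\|_{TV}\le K\sup_{i\ge1}\|\mathbf{x}-\mathbf{x}^{(i)}\|_1.$$
   Context: Let $N\ge1$, $\chi$ a finite set, and $\{\mathcal{P}_{\mathbf{x}}\}_{\mathbf{x}\in\mathbb{R}^N}$ a family of transition matrices on $\chi$. For $\mathbf{x}\in\mathbb{R}^N$, $\mathbf{v}\in\chi$, $\lambda>0$, the frozen process $\tilde V_t^{\lambda,\mathbf{x},\mathbf{v}}$ is the càdlàg continuous-time Markov chain on $\chi$ started at $\mathbf{v}$ which jumps according to the fixed matrix $\mathcal{P}_{\mathbf{x}}$ at each ring of a Poisson clock of rate $\lambda$; its law is $\tilde\mu_t^{\lambda,\mathbf{x},\mathbf{v}}$. For a sequence $l=(\mathbf{x}^{(k)})_{k\ge1}\subset\mathbb{R}^N$, $V_t^{\lambda,\mathbf{x},\mathbf{v},l}$ is the process on $\chi$ started at $\mathbf{v}$ which, at the $k$-th ring of a Poisson clock of rate $\lambda$, jumps according to $\mathcal{P}_{\mathbf{x}^{(k)}}$;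 its law is $\mu_t^{\lambda,\mathbf{x},\mathbf{v},l}$. $\tilde V_k^{\mathbf{x},\mathbf{v}}$ is the discrete-time chain with transition matrix $\mathcal{P}_{\mathbf{x}}$ started at $\mathbf{v}$. Absorbing-state assumptions: there are distinct states $\mathbf{e}^{(1)},\dots,\mathbf{e}^{(L)}\in\chi$ such that (i) each $\mathcal{P}_{\mathbf{x}}$ is stochastic; (ii) $\mathcal{P}_{\mathbf{x}}(\mathbf{e}^{(i)},\mathbf{e}^{(i)})=1$ for all $i,\mathbf{x}$; (iii) there exist $\tilde n\ge1$ and $z_0<1$ with $\mathbb{P}[\tilde V_{\tilde n}^{\mathbf{x},\mathbf{v}}\notin\{\mathbf{e}^{(1)},\dots,\mathbf{e}^{(L)}\}]\le z_0$ for all $\mathbf{x},\mathbf{v}$; (iv) there is $K_0>0$ with $\sum_{\mathbf{v}'}|\mathcal{P}_{\mathbf{x}}(\mathbf{v},\mathbf{v}')-\mathcal{P}_{\mathbf{x}'}(\mathbf{v},\mathbf{v}')|\le K_0\|\mathbf{x}-\mathbf{x}'\|_1$ for all $\mathbf{v},\mathbf{x},\mathbf{x}'$, where $\|\mathbf{w}\|_1=\sum_i|w_i|$. $\|\mu\|_{TV}:=\sum_{\mathbf{v}'\in\chi}|\mu(\mathbf{v}')|$. *)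

(* Defs.v *)
From HB Require Import structures.
From mathcomp Require Import all_boot all_order all_algebra.
From mathcomp Require Import all_classical all_reals all_analysis.
Set Implicit Arguments. Unset Strict Implicit. Unset Printing Implicit Defensive.
Import Order.TTheory GRing.Theory Num.Theory.
Local Open Scope ring_scope.

Section Defs.
Variables (R : realType) (chi : finType).

Definition tkernel := chi -> chi -> R.

Definition stochastic (P : tkernel) : Prop :=
  (forall v v', 0 <= P v v') /\ (forall v, \sum_(v' : chi) P v v' = 1).

Definition step (mu : chi -> R) (P : tkernel) : chi -> R :=
  fun v' => \sum_(w : chi) mu w * P w v'.

Definition dirac_chi (v : chi) : chi -> R := fun w => if w == v then 1 else 0.

Definition frozen_dist (P : tkernel) (v : chi) (n : nat) : chi -> R :=
  iter n (fun mu => step mu P) (dirac_chi v).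

(* Law after n jumps when the k-th jump (k = 1..n) uses Q (k-1):
   delta_v Q_0 Q_1 ... Q_(n-1). *)
Fixpoint seq_dist (Q : nat -> tkernel) (v : chi) (n : nat) : chi -> R :=
  match n with
  | 0 => dirac_chi v
  | n'.+1 => step (seq_dist Q v n') (Q n')
  end.

Definition poisson_weight (lam t : R) (k : nat) : R :=
  expR (- (lam * t)) * (lam * t) ^+ k / (k`!)%:R.

(* Law at time t of the process started at v that jumps at the k-th ring of
   a rate-lam Poisson clock according to Q (k-1) (Poisson mixture formula). *)
Definition poisson_law (lam t : R) (Q : nat -> tkernel) (v : chi) : chi -> R :=
  fun v' => limn (fun n => \sum_(k < n) poisson_weight lam t k * seq_dist Q v k v').

(* Total variation as in the paper: sum of absolute values. *)
Definition tv_norm (mu : chi -> R) : R := \sum_(v : chi) `|mu v|.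

End Defs.

Definition norm1 {R : realType} {N : nat} (w : 'rV[R]_N) : R :=
  \sum_(i < N) `|w ord0 i|.

Definition mu_frozen {R : realType} {N : nat} {chi : finType}
  (P : 'rV[R]_N -> tkernel R chi) (lam t : R) (x : 'rV[R]_N) (v : chi) : chi -> R :=
  poisson_law lam t (fun _ => P x) v.

(* Non-frozen law: mu_t^{lam,x,v,l}; l i stands for x^{(i+1)}, i.e. the
   (i+1)-th jump uses P (l i). *)
Definition mu_seq {R : realType} {N : nat} {chi : finType}
  (P : 'rV[R]_N -> tkernel R chi) (lam t : R) (l : nat -> 'rV[R]_N) (v : chi) : chi -> R :=
  poisson_law lam t (fun k => P (l k)) v.

(* Main.v *)
Require Import Defs.
From HB Require Import structures.
From mathcomp Require Import all_boot all_order all_algebra.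
From mathcomp Require Import all_classical all_reals all_analysis.
From mathcomp Require Import ring lra.
Import Order.TTheory GRing.Theory Num.Theory.
Import numFieldNormedType.Exports.
Local Open Scope ring_scope.
Local Open Scope classical_set_scope.

Set Implicit Arguments. Unset Strict Implicit.

Section Gen.
Variables (R : realType) (chi : finType).
Implicit Types (mu : chi -> R) (P : tkernel R chi) (Q : nat -> tkernel R chi).

Fixpoint run mu Q n : chi -> R :=
  match n with 0 => mu | n'.+1 => step (run mu Q n') (Q n') end.

Lemma seq_dist_run Q v n : seq_dist Q v n = run (dirac_chi R v) Q n.
Proof. by elim: n => //= n ->. Qed.

Lemma frozen_run P v n : frozen_dist P v n = run (dirac_chi R v) (fun _ => P) n.
Proof. by elim: n => //= n <-. Qed.

Lemma run_add mu Q j n : run mu Q (j + n) = run (run mu Q j) (fun i => Q (j + i)) n.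
Proof. by elim: n => [|n IH]; rewrite ?addn0 // addnS /= IH. Qed.

Lemma run_lin mu Q n v' : run mu Q n v' = \sum_w mu w * run (dirac_chi R w) Q n v'.
Proof.
elim: n v' => [|n IH] v' /=.
  rewrite (bigD1 v') //= /dirac_chi eqxx mulr1 big1 ?addr0 // => w /negbTE.
  by rewrite eq_sym => ->; rewrite mulr0.
rewrite /step.
transitivity (\sum_u \sum_w mu w * run (dirac_chi R w) Q n u * Q n u v').
  by apply: eq_bigr => u _; rewrite IH big_distrl.
rewrite exchange_big /=; apply: eq_bigr => w _.
by rewrite big_distrr /=; apply: eq_bigr => u _; rewrite mulrA.
Qed.

Lemma step_ge0 mu P : stochastic P -> (forall w, 0 <= mu w) -> forall v, 0 <= step mu P v.
Proof. by move=> [P0 _] mu0 v; apply: sumr_ge0 => w _; rewrite mulr_ge0. Qed.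

Lemma step_sum mu P : stochastic P -> \sum_v step mu P v = \sum_v mu v.
Proof.
move=> [_ P1]; rewrite /step exchange_big /=; apply: eq_bigr => w _.
by rewrite -big_distrr /= P1 mulr1.
Qed.

Lemma run_ge0 mu Q n : (forall j, stochastic (Q j)) -> (forall w, 0 <= mu w) ->
  forall v, 0 <= run mu Q n v.
Proof. by move=> sQ mu0; elim: n => //= n IH; apply: step_ge0. Qed.

Lemma run_sum mu Q n : (forall j, stochastic (Q j)) ->
  \sum_v run mu Q n v = \sum_v mu v.
Proof. by move=> sQ; elim: n => //= n <-; rewrite step_sum. Qed.

Lemma tv_step mu P : stochastic P -> tv_norm (step mu P) <= tv_norm mu.
Proof.
move=> [P0 P1]; rewrite /tv_norm /step.
apply: (le_trans (ler_sum _ (fun v _ => ler_norm_sum _ _ _))).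
rewrite exchange_big /=; apply: ler_sum => w _.
under eq_bigr => v _ do rewrite normrM (ger0_norm (P0 _ _)).
by rewrite -big_distrr /= P1 mulr1.
Qed.

Lemma tv_stepD mu P1 P2 :
  tv_norm (fun v => step mu P1 v - step mu P2 v) <=
  \sum_w `|mu w| * \sum_v `|P1 w v - P2 w v|.
Proof.
rewrite /tv_norm /step.
under eq_bigr => v _ do rewrite -sumrB.
apply: (le_trans (ler_sum _ (fun v _ => ler_norm_sum _ _ _))).
rewrite exchange_big /=; apply: ler_sum => w _.
by rewrite big_distrr /=; apply: ler_sum => v _; rewrite -mulrBr normrM.
Qed.

Lemma tv_triangle (f g : chi -> R) : tv_norm (fun v => f v + g v) <= tv_norm f + tv_norm g.
Proof. by rewrite /tv_norm -big_split /=; apply: ler_sum => v _; apply: ler_normD. Qed.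

Lemma step_linB mu1 mu2 P v : step mu1 P v - step mu2 P v = step (fun w => mu1 w - mu2 w) P v.
Proof. by rewrite /step -sumrB; apply: eq_bigr => w _; rewrite mulrBl. Qed.

Lemma run_diff mu Q1 Q2 k : (forall j, stochastic (Q1 j)) ->
  tv_norm (fun v => run mu Q1 k v - run mu Q2 k v) <=
  \sum_(j < k) \sum_w `|run mu Q2 j w| * \sum_v `|Q1 j w v - Q2 j w v|.
Proof.
move=> sQ; elim: k => [|k IH].
  by rewrite big_ord0 /tv_norm big1 // => v _; rewrite subrr normr0.
rewrite big_ord_recr /=.
set A := run mu Q1 k; set B := run mu Q2 k.
have -> : (fun v => step A (Q1 k) v - step B (Q2 k) v) =
   (fun v => step (fun w => A w - B w) (Q1 k) v + (step B (Q1 k) v - step B (Q2 k) v)).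
  by apply/funext => v; rewrite -step_linB addrA subrK.
apply: (le_trans (tv_triangle _ _)); apply: lerD; last exact: tv_stepD.
apply: le_trans IH; exact: tv_step.
Qed.

End Gen.

Section Abs.
Variables (R : realType) (chi : finType) (E : {set chi}).
Implicit Types (mu : chi -> R) (P : tkernel R chi) (Q : nat -> tkernel R chi).

Definition good P := stochastic P /\ forall e, e \in E -> P e e = 1.
Definition mout mu := \sum_(v in ~: E) mu v.

Lemma row_E P e v : good P -> e \in E -> P e v = dirac_chi R e v.
Proof.
move=> [[P0 P1] PE] eE; rewrite /dirac_chi.
have := P1 e; rewrite (bigD1 e) //= PE // => /(congr1 (fun x => x - 1)).
rewrite /= addrAC subrr add0r => /psumr_eq0P H.
case: eqP => [->|/eqP ne]; first exact: PE.
by apply: H => //; rewrite ne.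
Qed.

Lemma step_dirac_E P e : good P -> e \in E -> step (dirac_chi R e) P = dirac_chi R e.
Proof.
move=> gP eE; apply/funext => v; rewrite /step (bigD1 e) //= big1 ?addr0.
  by rewrite /dirac_chi eqxx mul1r row_E.
by move=> w /negbTE; rewrite /dirac_chi => ->; rewrite mul0r.
Qed.

Lemma run_dirac_E Q e n : (forall j, good (Q j)) -> e \in E ->
  run (dirac_chi R e) Q n = dirac_chi R e.
Proof. by move=> gQ eE; elim: n => //= n ->; apply: step_dirac_E. Qed.

Lemma mout_dirac_E e : e \in E -> mout (dirac_chi R e) = 0.
Proof.
move=> eE; apply: big1 => v; rewrite inE /dirac_chi; case: eqP => // -> .
by rewrite eE.
Qed.

Lemma mout_ge0 mu : (forall w, 0 <= mu w) -> 0 <= mout mu.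
Proof. by move=> mu0; apply: sumr_ge0. Qed.

Lemma mout_step mu P : good P -> (forall w, 0 <= mu w) -> mout (step mu P) <= mout mu.
Proof.
move=> gP mu0; rewrite /mout /step exchange_big /=.
rewrite [X in _ <= X]big_mkcond /=; apply: ler_sum => w _.
rewrite -big_distrr /=; case: ifP => wE.
  rewrite -[X in _ <= X]mulr1; apply: ler_wpM2l => //.
  have [[P0 P1] _] := gP; rewrite -(P1 w) [X in _ <= X](bigID (fun v => v \in ~: E)) /=.
  by rewrite lerDl sumr_ge0.
rewrite big1 ?mulr0 // => v vE; rewrite row_E //; last by move: wE; rewrite inE => /negbFE.
rewrite /dirac_chi; case: eqP => // eq; move: vE wE; rewrite eq => ->//.
Qed.

Lemma mout_run_le mu Q n : (forall j, good (Q j)) -> (forall w, 0 <= mu w) ->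
  mout (run mu Q n) <= mout mu.
Proof.
move=> gQ mu0; elim: n => //= n IH; apply: le_trans IH; apply: mout_step => //.
by apply: run_ge0 => // j; case: (gQ j).
Qed.

Lemma mout_run_lin mu Q n : mout (run mu Q n) = \sum_w mu w * mout (run (dirac_chi R w) Q n).
Proof.
rewrite /mout; under eq_bigr => v _ do rewrite run_lin.
by rewrite exchange_big /=; apply: eq_bigr => w _; rewrite big_distrr.
Qed.

Lemma mout_run_contract mu Q n z : (forall j, good (Q j)) -> (forall w, 0 <= mu w) ->
  (forall w, w \in ~: E -> mout (run (dirac_chi R w) Q n) <= z) ->
  mout (run mu Q n) <= z * mout mu.
Proof.
move=> gQ mu0 Hz; rewrite mout_run_lin /mout big_distrr /= [X in _ <= X]big_mkcond /=.
apply: ler_sum => w _; case: ifP => wE.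
  by rewrite mulrC; apply: ler_wpM2r => //; apply: Hz.
rewrite run_dirac_E //; first by rewrite -/(mout _) mout_dirac_E ?mulr0 //; move: wE; rewrite inE => /negbFE.
by move: wE; rewrite inE => /negbFE.
Qed.

Lemma tv_dirac_run w Q j : (forall j, stochastic (Q j)) ->
  \sum_u `|run (dirac_chi R w) Q j u| = 1.
Proof.
move=> sQ; rewrite (eq_bigr (fun u => run (dirac_chi R w) Q j u)); last first.
  move=> u _; rewrite ger0_norm //; apply: run_ge0 => // v.
  by rewrite /dirac_chi; case: eqP.
rewrite run_sum // (bigD1 w) //= big1 ?addr0 /dirac_chi ?eqxx // => u /negbTE -> //.
Qed.

Lemma mout_run_perturb w P0 Q n d : (forall j, stochastic (Q j)) -> stochastic P0 ->
  (forall j w' , \sum_v `|P0 w' v - Q j w' v| <= d) ->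
  mout (run (dirac_chi R w) Q n) <= mout (run (dirac_chi R w) (fun _ => P0) n) + n%:R * d.
Proof.
move=> sQ sP0 Hd.
have H := run_diff (dirac_chi R w) Q n (fun _ => sP0).
rewrite -lerBlDl /mout -sumrB.
apply: le_trans (ler_sum _ (fun v _ => ler_norm _)) _.
rewrite big_mkcond /=.
apply: le_trans (_ : tv_norm (fun v => run (dirac_chi R w) (fun=> P0) n v -
   run (dirac_chi R w) Q n v) <= _).
  apply: ler_sum => v _; case: ifP => _; first by rewrite distrC.
  by [].
apply: le_trans H _.
have -> : n%:R * d = \sum_(j < n) d by rewrite sumr_const card_ord mulr_natl.
apply: ler_sum => j _.
apply: le_trans (_ : \sum_w' `|run (dirac_chi R w) Q j w'| * d <= _).
  by apply: ler_sum => w' _; apply: ler_wpM2l.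
by rewrite -big_distrl /= tv_dirac_run // mul1r.
Qed.

End Abs.

Lemma block_sum (R : realType) (m : nat -> R) (n : nat) (z : R) :
  (0 < n)%N -> 0 <= z < 1 -> (forall j, 0 <= m j) -> (forall j, m j.+1 <= m j) ->
  (forall j, m (j + n)%N <= z * m j) ->
  forall k, \sum_(j < k) m j <= n%:R * m 0%N / (1 - z).
Proof.
move=> n0 /andP[z0 z1] m0 mdec mz.
have mle : forall a b, (a <= b)%N -> m b <= m a.
  move=> a b /subnKC <-; elim: (b - a)%N => [|c IH]; rewrite ?addn0 //.
  by rewrite addnS; apply: le_trans (mdec _) IH.
have z1' : 0 < 1 - z by rewrite subr_gt0.
suff: forall k j, \sum_(i < k) m (j + i)%N <= n%:R * m j / (1 - z).
  by move=> H k; have := H k 0%N; under eq_bigr do rewrite add0n.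
elim/ltn_ind => k IH j.
case: (leqP k n) => kn.
  apply: (le_trans (_ : _ <= \sum_(i < k) m j)).
    by apply: ler_sum => i _; apply: mle; rewrite leq_addr.
  rewrite sumr_const card_ord -[m j *+ k]mulr_natl.
  apply: le_trans (_ : n%:R * m j <= _); first by apply: ler_wpM2r; rewrite // ler_nat.
  by rewrite ler_pdivlMr // ler_piMr ?mulr_ge0 // lerBlDr lerDl.
have -> : k = (n + (k - n))%N by rewrite subnKC // ltnW.
rewrite big_split_ord /=.
have Hlt : (k - n < k)%N by rewrite ltn_subrL n0 (leq_trans n0 (ltnW kn)).
have H2 := IH (k - n)%N Hlt (j + n)%N.
have H1 : \sum_(i < n) m (j + i)%N <= n%:R * m j.
  apply: (le_trans (_ : _ <= \sum_(i < n) m j)).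
    by apply: ler_sum => i _; apply: mle; rewrite leq_addr.
  by rewrite sumr_const card_ord mulr_natl.
apply: le_trans (lerD H1 (_ : _ <= n%:R * m (j + n)%N / (1 - z))) _.
  by apply: le_trans H2; under eq_bigr do rewrite addnA.
apply: le_trans (_ : n%:R * m j + n%:R * (z * m j) / (1 - z) <= _).
  rewrite lerD2l ler_pM2r ?invr_gt0 // ler_wpM2l //.
rewrite -mulrA [z * _]mulrC mulrA mulrA -[X in X + _](mulfK (lt0r_neq0 z1')).
rewrite -mulrDl ler_pM2r ?invr_gt0 // mulrBr mulr1 subrK.
by [].
Qed.

Lemma tv_lim (R : realType) (chi : finType) (SA SB : nat -> chi -> R) (M : R) :
  (forall v, cvgn (fun n => SA n v)) -> (forall v, cvgn (fun n => SB n v)) ->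
  (forall n, \sum_v `|SA n v - SB n v| <= M) ->
  \sum_v `|limn (fun n => SA n v) - limn (fun n => SB n v)| <= M.
Proof.
move=> cA cB HM.
have cv : (fun n => \sum_v `|SA n v - SB n v|) @ \oo -->
    \sum_v `|limn (fun n => SA n v) - limn (fun n => SB n v)|.
  apply: (@cvg_big _ _ +%R 0 predT) => //.
    exact: add_continuous.
  move=> v _; apply: cvg_norm; apply: cvgB; [exact: (cA v) | exact: (cB v)].
rewrite -(cvg_lim _ cv) //; apply: limr_le; first by apply/cvg_ex; eexists; exact: cv.
by near=> n; apply: HM.
Unshelve. all: by end_near.
Qed.

Lemma pw_ge0 (R : realType) (lam t : R) k : 0 <= lam * t -> 0 <= poisson_weight lam t k.
Proof.
by move=> a0; rewrite /poisson_weight mulr_ge0 ?invr_ge0 ?mulr_ge0 ?expR_ge0 ?exprn_ge0.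
Qed.

Lemma pw_sum_le1 (R : realType) (lam t : R) n : 0 <= lam * t ->
  \sum_(k < n) poisson_weight lam t k <= 1.
Proof.
move=> a0; set a := lam * t.
have -> : \sum_(k < n) poisson_weight lam t k = expR (- a) * series (exp_coeff a) n.
  rewrite /series /= big_mkord big_distrr /=; apply: eq_bigr => k _.
  by rewrite /poisson_weight /exp_coeff /= mulrA.
have le : series (exp_coeff a) n <= expR a.
  apply: nondecreasing_cvgn_le; last exact: is_cvg_series_exp_coeff.
  apply/nondecreasing_seqP => m; rewrite /series /= big_nat_recr //= lerDl.
  exact: exp_coeff_ge0.
apply: le_trans (_ : expR (- a) * expR a <= 1).
  by rewrite ler_wpM2l ?expR_ge0.
by rewrite expRN mulVf ?gt_eqF ?expR_gt0.
Qed.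

Lemma law_cvg (R : realType) (lam t : R) (f : nat -> R) : 0 <= lam * t ->
  (forall k, 0 <= f k <= 1) ->
  cvgn (fun n => \sum_(k < n) poisson_weight lam t k * f k).
Proof.
move=> a0 f01; apply: nondecreasing_is_cvgn.
  apply/nondecreasing_seqP => m; rewrite big_ord_recr /= lerDl mulr_ge0 ?pw_ge0 //.
  by case/andP: (f01 m).
exists 1 => _ [n _ <-]; apply: le_trans (pw_sum_le1 n a0).
apply: ler_sum => k _; rewrite -[X in _ <= X]mulr1 ler_wpM2l ?pw_ge0 //.
by case/andP: (f01 k).
Qed.

Lemma run_dirac_01 (R : realType) (chi : finType) (Q : nat -> tkernel R chi) v k u :
  (forall j, stochastic (Q j)) -> 0 <= run (dirac_chi R v) Q k u <= 1.
Proof.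
move=> sQ.
have g0 : forall w, 0 <= run (dirac_chi R v) Q k w.
  by apply: run_ge0 => // w; rewrite /dirac_chi; case: eqP.
rewrite g0 /=.
have := tv_dirac_run v k sQ.
rewrite (bigD1 u) //= ger0_norm // => <-; rewrite lerDl sumr_ge0 //.
Qed.


Unset Implicit Arguments. Set Strict Implicit.

Theorem mainTheorem4 (R : realType) (N : nat) (chi : finType)
  (P : 'rV[R]_N -> tkernel R chi) (E : {set chi}) (ntilde : nat) (z0 K0 : R) :
  (1 <= N)%N ->
  (forall x, stochastic (P x)) ->
  (forall x e, e \in E -> P x e e = 1) ->
  (1 <= ntilde)%N -> z0 < 1 ->
  (forall x v, \sum_(v' in ~: E) frozen_dist (P x) v ntilde v' <= z0) ->
  0 < K0 ->
  (forall x x' v, \sum_(v' : chi) `|P x v v' - P x' v v'| <= K0 * norm1 (x - x')) ->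
  exists K : R, 0 < K /\
    forall (x : 'rV[R]_N) (v : chi) (lam t : R) (l : nat -> 'rV[R]_N),
      0 < lam -> 0 <= t ->
      (forall i, norm1 (x - l i) <= (1 - z0) / (2 * K0 * ntilde%:R)) ->
      tv_norm (fun v' => mu_frozen P lam t x v v' - mu_seq P lam t l v v')
        <= K * sup (range (fun i => norm1 (x - l i))).
Proof.
move=> N1 sP absP n1 z0lt1 Hfz K0pos Hlip.
have z1' : 0 < 1 - z0 by rewrite subr_gt0.
have n0 : 0 < ntilde%:R :> R by rewrite ltr0n.
exists (2 * K0 * ntilde%:R / (1 - z0)); split.
  by rewrite divr_gt0 // !mulr_gt0.
move=> x v lam t l lam0 t0 Hl.
set c := (1 - z0) / (2 * K0 * ntilde%:R).
set dl := sup (range (fun i => norm1 (x - l i))).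
have hdl : forall i, norm1 (x - l i) <= dl.
  move=> i; apply: sup_upper_bound; last by exists i.
  split; first by exists (norm1 (x - l 0%N)), 0%N.
  by exists c => _ [j _ <-]; apply: Hl.
have n1ge0 : forall w : 'rV[R]_N, 0 <= norm1 w by move=> w; apply: sumr_ge0.
have dl0 : 0 <= dl by apply: le_trans (hdl 0%N).
have gP : forall y, good E (P y) by move=> y; split; [apply: sP | apply: absP].
pose Q := fun j => P (l j).
pose A := fun k => run (dirac_chi R v) (fun _ => P x) k.
pose B := fun k => run (dirac_chi R v) Q k.
have z0ge0 : 0 <= z0.
  apply: le_trans (Hfz x v); apply: sumr_ge0 => u _; rewrite frozen_run.
  by apply: run_ge0 => // w; rewrite /dirac_chi; case: eqP.
set z1 := (1 + z0) / 2.
have mB0 : forall j w, 0 <= B j w.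
  by move=> j w; apply: run_ge0 => // [i|u]; [apply: sP | rewrite /dirac_chi; case: eqP].
have key : forall k, tv_norm (fun u => A k u - B k u) <= 2 * K0 * ntilde%:R / (1 - z0) * dl.
  move=> k.
  apply: le_trans (@run_diff R chi (dirac_chi R v) (fun _ => P x) Q k (fun _ => sP x)) _.
  apply: le_trans (_ : \sum_(j < k) K0 * dl * mout E (B j) <= _).
    apply: ler_sum => j _; rewrite /mout big_distrr [X in _ <= X]big_mkcond /=.
    apply: ler_sum => w _; case: ifP => wE.
      rewrite ger0_norm // mulrC; apply: ler_wpM2r => //.
      apply: le_trans (Hlip x (l j) w) _; apply: ler_wpM2l; [exact: ltW | ].
      exact: hdl.
    have wE' : w \in E by move: wE; rewrite inE => /negbFE.
    by rewrite big1 ?mulr0 // => u _; rewrite /Q (row_E u (gP x) wE') (row_E u (gP (l j)) wE') subrr normr0.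
  rewrite -big_distrr /=.
  have z1lt : 0 <= z1 < 1 by apply/andP; split; rewrite /z1; lra.
  have mdec : forall j, mout E (B j.+1) <= mout E (B j).
    by move=> j; apply: (mout_step (gP (l j)) (mB0 j)).
  have hc : ntilde%:R * (K0 * c) = (1 - z0) / 2.
    by rewrite /c; field; rewrite !gt_eqF.
  have mcon : forall j, mout E (B (j + ntilde)%N) <= z1 * mout E (B j).
    move=> j; rewrite /B run_add; apply: mout_run_contract => //.
    - by move=> i; exact: gP.
    move=> w wE.
    apply: le_trans (@mout_run_perturb R chi E w (P x) (fun i => Q (j + i)%N) ntilde (K0 * c) _ (sP x) _) _.
    - by move=> i; exact: sP.
    - move=> i w'; apply: le_trans (Hlip _ _ _) _; apply: ler_wpM2l; [exact: ltW | exact: Hl].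
    rewrite -frozen_run hc /mout; have := Hfz x w; rewrite /z1; lra.
  have m0le : mout E (B 0%N) <= 1.
    rewrite /mout /B /=; apply: (@le_trans _ _ (\sum_u dirac_chi R v u)).
      rewrite [X in _ <= X](bigID (fun u => u \in ~: E)) /= lerDl; apply: sumr_ge0 => u _.
      by rewrite /dirac_chi; case: eqP.
    by rewrite (bigD1 v) //= big1 ?addr0 /dirac_chi ?eqxx // => u /negbTE ->.
  have bs := @block_sum R (fun j => mout E (B j)) ntilde z1 n1 z1lt (fun j => mout_ge0 E (mB0 j)) mdec mcon k.
  apply: le_trans (_ : K0 * dl * (ntilde%:R * 1 / (1 - z1)) <= _).
    apply: ler_wpM2l; first by rewrite mulr_ge0 // ltW.
    apply: le_trans bs _; rewrite ler_pM2r ?invr_gt0 ?subr_gt0; last by case/andP: z1lt.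
    by rewrite ler_wpM2l // ltW.
  have eq : K0 * dl * (ntilde%:R * 1 / (1 - z1)) = 2 * K0 * ntilde%:R / (1 - z0) * dl.
    by rewrite /z1; field; rewrite gt_eqF.
  by rewrite eq.
have a0 : 0 <= lam * t by apply: mulr_ge0 => //; exact: ltW.
have Kdl0 : 0 <= 2 * K0 * ntilde%:R / (1 - z0) * dl.
  apply: mulr_ge0 => //; apply: divr_ge0; last exact: ltW.
  by apply: mulr_ge0; [apply: mulr_ge0 => //; exact: ltW | exact: ltW].
rewrite /tv_norm /mu_frozen /mu_seq /poisson_law.
apply: (@tv_lim R chi
  (fun n u => \sum_(k < n) poisson_weight lam t k * seq_dist (fun _ => P x) v k u)
  (fun n u => \sum_(k < n) poisson_weight lam t k * seq_dist (fun k => P (l k)) v k u)).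
- move=> u; apply: (@law_cvg R lam t (fun k => seq_dist (fun _ => P x) v k u)) => // k.
  by rewrite seq_dist_run; apply: run_dirac_01 => j; exact: sP.
- move=> u; apply: (@law_cvg R lam t (fun k => seq_dist (fun k => P (l k)) v k u)) => // k.
  by rewrite seq_dist_run; apply: run_dirac_01 => j; exact: sP.
move=> m.
apply: le_trans (_ : \sum_u \sum_(k < m) poisson_weight lam t k * `|A k u - B k u| <= _).
  apply: ler_sum => u _; rewrite -sumrB; apply: le_trans (ler_norm_sum _ _ _) _.
  apply: ler_sum => k _; rewrite -mulrBr normrM ger0_norm ?pw_ge0 // !seq_dist_run.
  by [].
rewrite exchange_big /=.
apply: le_trans (_ : \sum_(k < m) poisson_weight lam t k * (2 * K0 * ntilde%:R / (1 - z0) * dl) <= _).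
  apply: ler_sum => k _; rewrite -big_distrr /=; apply: ler_wpM2l; first exact: pw_ge0.
  exact: (key k).
rewrite -big_distrl /= -[X in _ <= X]mul1r; apply: ler_wpM2r => //.
exact: pw_sum_le1.
Qed.
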